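(* Let $S$ be a finite set of endomorphisms of $\mathbb{P}^N$, all of degree at least $2$, let $C_S:=\max\{\sup_{\phi\in S}C(\phi),1\}$, let $K/\mathbb{Q}$ be a finite extension over which every map in $S$ is defined, let $P\in\mathbb{P}^N(K)$, and let $F_{P,S}:=\{Q\in\mathrm{Orb}_S(P):h(Q)\leq 2C_S\}$. If $\gamma\in\Phi_S$ satisfies $\hat h_\gamma(P)=0$, then $\mathrm{Orb}_\gamma(P)\subseteq F_{P,S}$.
   Context: $h$ is the absolute Weil height. For an endomorphism $\phi$ of degree $d_\phi$, $C(\phi)=\sup_{Q\in\mathbb{P}^N(\overline{\mathbb{Q}})}|h(\phi(Q))-d_\phi h(Q)|$. $\mathrm{Orb}_S(P)=\{\rho(P):\rho\in M_S\}$, where $M_S$ is the monoid of the identity and all finite compositions of elements of $S$. $\Phi_S=\prod_{i=1}^\infty S$; for $\gamma=(\theta_1,\theta_2,\dots)$, $\gamma_n=\theta_n\circ\cdots\circ\theta_1$, $\mathrm{Orb}_\gamma(P)=\{P,\gamma_1(P),\gamma_2(P),\dots\}$, and $\hat h_\gamma(P)=\lim_{n\to\infty}h(\gamma_n(P))/\deg(\gamma_n)$ (this limit exists). *)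

(* Defs.v *)
From HB Require Import structures.
From mathcomp Require Import all_boot all_order all_algebra all_field.
From mathcomp Require Import all_classical all_reals all_analysis.
From mathcomp Require Import Rstruct Rstruct_topology finmap.
From mathcomp Require mpoly.
From Stdlib Require Import ClassicalEpsilon.

Set Implicit Arguments.
Unset Strict Implicit.
Unset Printing Implicit Defensive.

Import Order.TTheory GRing.Theory Num.Theory.
Import numFieldNormedType.Exports.
Local Open Scope classical_set_scope.
Local Open Scope ring_scope.

Definition RR := Rdefinitions.R.

Definition vec (N : nat) := 'I_N.+1 -> algC.

Definition nonzero_vec N (x : vec N) : Prop := exists i, x i != 0.

Definition proj_eq N (x y : vec N) : Prop :=
  exists c : algC, c != 0 /\ forall i, y i = c * x i.

(* ---------- real value of a nonnegative real algebraic number ------------ *)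
Definition toR (x : algC) : RR :=
  sup [set r : RR | exists q : rat, r = ratr q /\ (ratr q : algC) <= x].

Definition is_padic_abs (p : nat) (v : algC -> RR) : Prop :=
  [/\ forall x, 0 <= v x,
      forall x, v x = 0 <-> x = 0,
      forall x y, v (x * y) = v x * v y,
      forall x y, v (x + y) <= Num.max (v x) (v y)
    & v p%:R = (p%:R)^-1].

Definition padic_abs (p : nat) : algC -> RR :=
  epsilon (inhabits (fun _ => 0)) (is_padic_abs p).

(* the (finite) set of Galois conjugates of x: its images under all field
   embeddings Qbar -> Qbar (= automorphisms of Qbar over Q) *)
Definition gal_orbit N (x : vec N) : set (vec N) :=
  [set y | exists tau : {rmorphism algC -> algC}, y = (fun i => tau (x i))].

Definition log_max_arch N (y : vec N) : RR :=
  ln (\big[Num.max/0]_(i < N.+1) toR `|y i|).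

Definition log_max_padic N (p : nat) (y : vec N) : RR :=
  ln (\big[Num.max/0]_(i < N.+1) padic_abs p (y i)).

(* absolute logarithmic Weil height of the point [x_0 : ... : x_N]:
   h(x) = 1/[K:Q] sum_{sigma : K -> Qbar} ( log max_i |sigma x_i|_oo
          + sum_p log max_i |sigma x_i|_p ),  K = Q(x_0,...,x_N);
   the embeddings sigma of K correspond to the Galois conjugates of x. *)
Definition weil_height N (x : vec N) : RR :=
  let O := fset_set (gal_orbit x) in
  ((#|` O|)%fset%:R)^-1 *
  (\sum_(y <- O)
     (log_max_arch y +
      (\sum_(p \in [set p : nat | prime p]) log_max_padic p y)%R))%R.

Definition homogeneous n (d : nat) (f : mpoly.mpoly n algC) : Prop :=
  forall m, mpoly.mcoeff m f != 0 -> mpoly.mdeg m = d.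

Record endo (N : nat) := Endo {
  comp : 'I_N.+1 -> mpoly.mpoly N.+1 algC;
  degree : nat;
  comp_homog : forall i, homogeneous degree (comp i);
  comp_nozero : forall x : vec N, nonzero_vec x ->
                  exists i, mpoly.meval x (comp i) != 0
}.

Definition apply_endo N (phi : endo N) (x : vec N) : vec N :=
  fun i => mpoly.meval x (comp phi i).

Definition Cconst N (phi : endo N) : \bar RR :=
  ereal_sup [set (`| weil_height (apply_endo phi x)
                    - (degree phi)%:R * weil_height x |)%:E
            | x in [set x : vec N | nonzero_vec x]].

Definition CS N (I : finType) (S : I -> endo N) : \bar RR :=
  Order.max (ereal_sup [set Cconst (S i) | i in [set: I]]) 1%:E.

(* a word w = [:: i1; ...; ik] acts as S ik o ... o S i1 (element of M_S) *)
Definition apply_word N (I : finType) (S : I -> endo N) (w : seq I)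
    (x : vec N) : vec N :=
  foldl (fun y i => apply_endo (S i) y) x w.

Definition OrbS N (I : finType) (S : I -> endo N) (P : vec N) : set (vec N) :=
  [set Q | exists w : seq I, proj_eq (apply_word S w P) Q].

Definition FPS N (I : finType) (S : I -> endo N) (P : vec N) : set (vec N) :=
  [set Q | OrbS S P Q /\ ((weil_height Q)%:E <= 2%:E * CS S)%E].

(* gamma = (theta_1, theta_2, ...) in Phi_S, encoded by gamma : nat -> I with
   theta_{k+1} = S (gamma k);  gamma_n = theta_n o ... o theta_1 *)
Fixpoint gamma_pt N (I : finType) (S : I -> endo N) (gamma : nat -> I)
    (P : vec N) (n : nat) : vec N :=
  match n with
  | 0 => P
  | k.+1 => apply_endo (S (gamma k)) (gamma_pt S gamma P k)
  end.

Definition gamma_deg N (I : finType) (S : I -> endo N) (gamma : nat -> I)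
    (n : nat) : nat :=
  (\prod_(k < n) degree (S (gamma k)))%N.

Definition Orbgamma N (I : finType) (S : I -> endo N) (gamma : nat -> I)
    (P : vec N) : set (vec N) :=
  [set Q | exists n, Q = gamma_pt S gamma P n].

Definition number_field (K : pred algC) : Prop :=
  [/\ 0 \in K /\ 1 \in K,
      {in K &, forall x y, x - y \in K},
      {in K &, forall x y, x * y \in K},
      {in K, forall x, x^-1 \in K}
    & exists b : seq algC, all (mem K) b /\
        forall x, x \in K -> exists c : seq rat,
          x = \sum_(k < size b) ratr (nth 0 c k) * nth 0 b k].

Definition endo_defined_over N (K : pred algC) (phi : endo N) : Prop :=
  exists c : algC, c != 0 /\
    forall i m, c * mpoly.mcoeff m (comp phi i) \in K.

Definition point_over N (K : pred algC) (P : vec N) : Prop :=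
  exists c : algC, c != 0 /\ forall i, c * P i \in K.

(* Main.v *)
Require Import Defs.
From HB Require Import structures.
From mathcomp Require Import all_boot all_order all_algebra all_field.
From mathcomp Require Import all_classical all_reals all_analysis.
From mathcomp Require Import Rstruct Rstruct_topology.
From mathcomp Require Import ring lra.
Import Order.TTheory GRing.Theory Num.Theory.
Import numFieldNormedType.Exports.
Local Open Scope classical_set_scope.
Local Open Scope ring_scope.

Lemma gamma_nz N (I : finType) (S : I -> endo N) gamma P n :
  nonzero_vec P -> nonzero_vec (gamma_pt S gamma P n).
Proof.
move=> nzP; elim: n => [|n IH] //=.
have [i Hi] := comp_nozero (S (gamma n)) IH.
by exists i.
Qed.

Lemma gamma_word N (I : finType) (S : I -> endo N) gamma P n :
  apply_word S [seq gamma k | k <- iota 0 n] P = gamma_pt S gamma P n.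
Proof.
elim: n => [|n IH] //.
rewrite /apply_word in IH *.
by rewrite -addn1 iotaD add0n map_cat foldl_cat IH addn1.
Qed.

Lemma gamma_deg_S N (I : finType) (S : I -> endo N) gamma n :
  gamma_deg S gamma n.+1 = (gamma_deg S gamma n * degree (S (gamma n)))%N.
Proof. by rewrite /gamma_deg big_ord_recr. Qed.

Lemma gamma_deg_gt0 N (I : finType) (S : I -> endo N) gamma n :
  (forall i, (2 <= degree (S i))%N) -> (0 < gamma_deg S gamma n)%N.
Proof.
move=> Hd; elim: n => [|n IH]; first by rewrite /gamma_deg big_ord0.
by rewrite gamma_deg_S muln_gt0 IH /= (leq_trans _ (Hd _)).
Qed.

Theorem lemma4p3 (N : nat) (I : finType) (S : I -> endo N)
  (K : pred algC) (P : vec N) (gamma : nat -> I) :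
  (forall i, (2 <= degree (S i))%N) ->
  number_field K ->
  (forall i, endo_defined_over K (S i)) ->
  nonzero_vec P ->
  point_over K P ->
  (fun n => weil_height (gamma_pt S gamma P n) / (gamma_deg S gamma n)%:R)
     @ \oo --> (0 : RR) ->
  Orbgamma S gamma P `<=` FPS S P.
Proof.
move=> Hd _ _ nzP _ Hlim Q [n ->]; split.
  exists [seq gamma k | k <- iota 0 n]; exists 1; split; first exact: oner_neq0.
  by move=> i; rewrite gamma_word mul1r.
have CS1 : (1%:E <= CS S)%E by rewrite /CS le_max lexx orbT.
case EC: (CS S) => [r| |]; last by rewrite EC in CS1.
  2: by rewrite mulry gtr0_sg // mul1e leey.
rewrite EC lee_fin in CS1.
have bound : forall i (x : vec N), nonzero_vec x ->
  `| weil_height (apply_endo (S i) x) - (degree (S i))%:R * weil_height x | <= r.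
  move=> i x nzx.
  have : (Cconst (S i) <= CS S)%E.
    rewrite /CS le_max; apply/orP; left.
    by apply: ereal_sup_ubound; exists i.
  rewrite EC => HC.
  rewrite -lee_fin; apply: le_trans HC.
  by apply: ereal_sup_ubound; exists x.
set h := fun m => weil_height (gamma_pt S gamma P m).
set D := fun m => ((gamma_deg S gamma m)%:R : RR).
have Dpos : forall m, 0 < D m by move=> m; rewrite /D ltr0n gamma_deg_gt0.
set b := fun m => (h m - r) / D m.
have step : forall m, b m <= b m.+1.
  move=> m.
  have := bound (gamma m) _ (@gamma_nz _ _ S gamma P m nzP).
  rewrite -/(gamma_pt S gamma P m.+1) -/(h m.+1) -/(h m) => Hb.
  have dge : (2 : RR) <= (degree (S (gamma m)))%:R by rewrite ler_nat Hd.
  set d := ((degree (S (gamma m)))%:R : RR) in Hb dge.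
  have Hb' : d * h m - r <= h m.+1.
    by move: Hb; rewrite ler_norml => /andP[H1 _]; lra.
  have Dm := Dpos m.
  rewrite /b /D gamma_deg_S natrM -/(D m) -/d.
  have -> : (h m - r) / D m = (d * (h m - r)) / (D m * d).
    by field; apply/andP; split; rewrite gt_eqF //; lra.
  apply: ler_wpM2r; first by rewrite invr_ge0 mulr_ge0 //; lra.
  nra.
have mono : forall k, b n <= b (n + k)%N.
  elim=> [|k IH];  first by rewrite addn0.
  by apply: (le_trans IH); rewrite addnS step.
have bn0 : b n <= 0.
  have HL : lim ((fun m => h m / D m) @ \oo) = (0 : RR).
    by apply: cvg_lim => //; exact: (@Rhausdorff RR).
  rewrite -HL.
  apply: limr_ge; first by apply/cvg_ex; exists 0.
  exists n => // m /= Hm.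
  rewrite -(subnKC Hm); apply: (le_trans (mono _)).
  rewrite /b; apply: ler_wpM2r; first by rewrite invr_ge0 ltW.
  lra.
have : h n - r <= 0.
  by move: bn0; rewrite /b ler_pdivrMr // mul0r.
rewrite -/(h n) -EFinM lee_fin => ?; lra.
Qed.
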